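(* Let $G$ be a connected graph of order $n$, minimum degree $\delta \geq 3$ and maximum degree $\Delta$, and let $N = n-\Delta+\delta$. Then \[ \mu(G) \leq \frac{N(N-1)}{n(n-1)}\cdot \frac{n+2\Delta}{\delta+1} + 4 . \] Equivalently, $W(G) \le \binom{N}{2}\frac{n+2\Delta}{\delta+1} + 2n(n-1)$.
   Context: For a connected graph $G$ with vertex set $V(G)$, $d_G(u,v)$ denotes the usual shortest-path distance. The Wiener index is $W(G)=\sum_{\{u,v\}\subseteq V(G)} d_G(u,v)$ (sum over unordered pairs of distinct vertices), and the average distance of a connected graph of order $n\ge 2$ is $\mu(G)=\binom{n}{2}^{-1}W(G)$. *)

(* Defs.v *)
From mathcomp Require Import all_boot all_order all_algebra.
Set Implicit Arguments. Unset Strict Implicit. Unset Printing Implicit Defensive.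

Definition simple_graph (T : finType) (e : rel T) : Prop :=
  symmetric e /\ irreflexive e.

Definition connected_graph (T : finType) (e : rel T) : Prop :=
  forall x y : T, connect e x y.

Definition deg (T : finType) (e : rel T) (x : T) : nat := #|[set y | e x y]|.

(* minimum and maximum degree (n >= 1 is ensured by the hypotheses) *)
Definition mindeg (T : finType) (e : rel T) : nat :=
  \big[minn/#|T|]_(x : T) deg e x.
Definition maxdeg (T : finType) (e : rel T) : nat :=
  \max_(x : T) deg e x.

Fixpoint ball (T : finType) (e : rel T) (k : nat) (x : T) : {set T} :=
  match k with
  | 0 => [set x]
  | k'.+1 => ball e k' x :|: [set z | [exists w in ball e k' x, e w z]]
  end.

(* shortest-path distance: least k with y in ball k x (any shortest path has
   length < #|T|; for connected graphs this is the usual distance). *)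
Definition dist (T : finType) (e : rel T) (x y : T) : nat :=
  find (fun k => y \in ball e k x) (iota 0 #|T|).

(* Wiener index: sum over unordered pairs of distinct vertices
   = half of the sum over ordered pairs (d(x,x) = 0). *)
Definition wiener (T : finType) (e : rel T) : nat :=
  (\sum_(x : T) \sum_(y : T) dist e x y) %/ 2.

Definition avg_dist (T : finType) (e : rel T) : rat :=
  ((wiener e)%:R / ('C(#|T|, 2))%:R)%R.

(* Main.v *)
Require Import Defs.
From mathcomp Require Import all_boot all_order all_algebra.
From mathcomp Require Import zify ring lra.
Import GRing.Theory Num.Theory.
Module PA.
Set Implicit Arguments. Unset Strict Implicit. Unset Printing Implicit Defensive.
Import Order.TTheory GRing.Theory Num.Theory.

Section Generic.
Variables (T : finType) (r : rel T).

Lemma ballS k x : ball r k.+1 x = ball r k x :|: [set z | [exists w in ball r k x, r w z]].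
Proof. by []. Qed.

Lemma in_ball0 x y : (y \in ball r 0 x) = (y == x).
Proof. by rewrite /= in_set1. Qed.

Lemma ball_self x k : x \in ball r k x.
Proof. elim: k => [|k IH]; first by rewrite in_ball0. by rewrite ballS in_setU IH. Qed.

Lemma ball_subS k x : ball r k x \subset ball r k.+1 x.
Proof. by rewrite ballS subsetUl. Qed.

Lemma ball_mono k m x : k <= m -> ball r k x \subset ball r m x.
Proof.
move=> /subnK <-; elim: (m - k) => [|j IH] //=.
exact: subset_trans IH (ball_subS _ _).
Qed.

Lemma ball_step k x w y : w \in ball r k x -> r w y -> y \in ball r k.+1 x.
Proof. by move=> Hw Hr; rewrite ballS in_setU inE; apply/orP; right; apply/existsP; exists w; rewrite Hw. Qed.

Lemma ballSP k x y : y \in ball r k.+1 x ->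
  y \in ball r k x \/ exists2 w, w \in ball r k x & r w y.
Proof.
rewrite ballS in_setU inE => /orP [H|/existsP [w /andP [Hw Hr]]]; [by left|right].
by exists w.
Qed.

Lemma ball_trans a b x y u : y \in ball r a x -> u \in ball r b y -> u \in ball r (a + b) x.
Proof.
move=> Hy; elim: b u => [|b IH] u; first by rewrite in_ball0 addn0 => /eqP ->.
move=> /ballSP [H|[w Hw Hr]]; rewrite addnS.
  exact: (subsetP (ball_subS _ _)) (IH _ H).
exact: ball_step (IH _ Hw) Hr.
Qed.

Lemma ball_sym : symmetric r -> forall k x y, y \in ball r k x -> x \in ball r k y.
Proof.
move=> rs; elim=> [|k IH] x y; first by rewrite !in_ball0 eq_sym.
move=> /ballSP [H|[w Hw Hr]].
  exact: (subsetP (ball_subS _ _)) (IH _ _ H).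
have H1 : w \in ball r 1 y by apply: ball_step (ball_self _ _) _; rewrite rs.
by rewrite -add1n; apply: ball_trans H1 (IH _ _ Hw).
Qed.

Lemma ball_fix k x : ball r k.+1 x = ball r k x -> forall m, k <= m -> ball r m x = ball r k x.
Proof.
move=> Hk m /subnK <-; elim: (m - k) => [|j IH] //.
by rewrite addSn ballS IH -ballS.
Qed.

Lemma ball_card x k : (forall j, j < k -> ball r j.+1 x != ball r j x) -> k < #|ball r k x|.
Proof.
elim: k => [|k IH] H; first by rewrite card_gt0; apply/set0Pn; exists x; apply: ball_self.
have H1 : k < #|ball r k x| by apply: IH => j Hj; apply: H; apply: ltnW.
apply: (leq_ltn_trans H1); apply: proper_card; rewrite properEneq ball_subS andbT.
by rewrite eq_sym H.
Qed.

Lemma ball_sat x m : ball r m x \subset ball r #|T|.-1 x.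
Proof.
have [j [Hj Hfix]] : exists j, j < #|T| /\ ball r j.+1 x = ball r j x.
  have := @ball_card x #|T|.
  case: (boolP [exists j : 'I_#|T|, ball r j.+1 x == ball r j x]).
    by move=> /existsP [j /eqP Hj] _; exists j.
  move=> Hn Hc; exfalso.
  have : #|T| < #|ball r #|T| x|.
    apply: Hc => j Hj; apply/negP => Heq; move/negP: Hn; apply; apply/existsP.
    by exists (Ordinal Hj).
  by rewrite ltnNge max_card.
have Hj' : j <= #|T|.-1 by rewrite -ltnS prednK // (leq_ltn_trans _ Hj).
case: (leqP m j) => Hm.
  exact: subset_trans (ball_mono x Hm) (ball_mono x Hj').
by rewrite (ball_fix Hfix (ltnW Hm)) -(ball_fix Hfix Hj').
Qed.

Definition reach x y := exists k, y \in ball r k x.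

Lemma reach_refl x : reach x x.
Proof. by exists 0; apply: ball_self. Qed.

Lemma reach_trans x y u : reach x y -> reach y u -> reach x u.
Proof. move=> [a Ha] [b Hb]; exists (a + b); exact: ball_trans Ha Hb. Qed.

Lemma reach_sym : symmetric r -> forall x y, reach x y -> reach y x.
Proof. move=> rs x y [k Hk]; exists k; exact: ball_sym. Qed.

Lemma distP x y : reach x y -> forall k, (dist r x y <= k) = (y \in ball r k x).
Proof.
move=> [m Hm] k.
have Hs : y \in ball r #|T|.-1 x by exact: (subsetP (ball_sat x m)).
have Hpos : 0 < #|T| by apply/card_gt0P; exists x.
have Hhas : has (fun k => y \in ball r k x) (iota 0 #|T|).
  apply/hasP; exists #|T|.-1; last by [].
  by rewrite mem_iota add0n prednK // leqnn.
have Hlt : dist r x y < #|T| by move: Hhas; rewrite has_find size_iota.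
have Hin : y \in ball r (dist r x y) x.
  have := nth_find 0 Hhas; rewrite nth_iota //.
apply/idP/idP => H.
  exact: (subsetP (ball_mono x H)).
rewrite leqNgt; apply/negP => Hk.
have := before_find 0 Hk; rewrite nth_iota ?add0n ?H //.
exact: ltn_trans Hk Hlt.
Qed.

Lemma dist_in x y : reach x y -> y \in ball r (dist r x y) x.
Proof. by move=> H; rewrite -distP. Qed.

Lemma dist_self x : dist r x x = 0.
Proof. by apply/eqP; rewrite -leqn0 distP ?in_ball0 //; apply: reach_refl. Qed.

Lemma dist0 x y : reach x y -> dist r x y = 0 -> y = x.
Proof. by move=> H H0; apply/eqP; rewrite -in_ball0 -distP // H0. Qed.

Lemma dist_tri x y u : reach x y -> reach y u -> dist r x u <= dist r x y + dist r y u.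
Proof.
move=> Hxy Hyu; rewrite distP; last exact: reach_trans Hxy Hyu.
exact: ball_trans (dist_in Hxy) (dist_in Hyu).
Qed.

Lemma dist_sym : symmetric r -> forall x y, reach x y -> dist r x y = dist r y x.
Proof.
move=> rs x y H; have H' := reach_sym rs H.
apply/eqP; rewrite eqn_leq; apply/andP; split.
  by rewrite distP //; apply: ball_sym => //; apply: dist_in.
by rewrite distP //; apply: ball_sym => //; apply: dist_in.
Qed.

Lemma dist_pred x y : reach x y -> 0 < dist r x y ->
  exists w, [/\ reach x w, dist r x w = (dist r x y).-1 & r w y].
Proof.
move=> H Hp; have Hin := dist_in H.
rewrite -(prednK Hp) in Hin.
case/ballSP: Hin => [Hb|[w Hw Hr]].
  by move: Hb; rewrite -distP // leqNgt ltn_predL Hp.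
have Rw : reach x w by exists (dist r x y).-1.
exists w; split => //.
apply/eqP; rewrite eqn_leq distP // Hw /=.
have : dist r x y <= (dist r x w).+1.
  by rewrite distP //; apply: ball_step (dist_in Rw) Hr.
by rewrite -{1}(prednK Hp) ltnS.
Qed.

Lemma dist_level x y q : reach x y -> q <= dist r x y ->
  exists u, [/\ reach x u, dist r x u = q & (0 < q -> exists w, r w u)].
Proof.
move=> H; move Hd: (dist r x y) => d Hq.
elim: d y H Hd Hq => [|d IH] y H Hd Hq.
  by exists y; move: Hq; rewrite leqn0 => /eqP ->; split.
case: (ltngtP q d.+1) => Hc; last first.
- exists y; split => //; first by rewrite Hd.
  have [w [_ _ Hr]] : exists w, [/\ reach x w, dist r x w = (dist r x y).-1 & r w y].
    by apply: dist_pred => //; rewrite Hd.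
  by move=> _; exists w.
- by move: Hq; rewrite leqNgt Hc.
- have [w [Rw Dw _]] := dist_pred H (ltac:(by rewrite Hd)).
  rewrite Hd /= in Dw.
  by apply: (IH w Rw Dw); rewrite -ltnS.
Qed.

Lemma path_ball x p : path r x p -> last x p \in ball r (size p) x.
Proof.
elim: p x => [|y p IH] x; first by rewrite /= in_set1.
rewrite [path _ _ _]/= => /andP [Hxy Hp].
have H1 : y \in ball r 1 x by apply: ball_step (ball_self _ _) Hxy.
by rewrite [last _ _]/= [size _]/= -add1n; apply: ball_trans H1 (IH _ Hp).
Qed.

Lemma connect_reach x y : connect r x y -> reach x y.
Proof. by move=> /connectP [p Hp ->]; exists (size p); apply: path_ball. Qed.

End Generic.

End PA.
Import PA.

Module PL.
Set Implicit Arguments. Unset Strict Implicit. Unset Printing Implicit Defensive.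
Import Order.TTheory GRing.Theory Num.Theory.

Lemma lv1 (g : nat -> nat) w R : (forall q, 0 < q <= R -> w <= g q) ->
  R * w <= \sum_(q < R.+1) g q.
Proof.
elim: R => [|R IH] H; first by rewrite mul0n.
rewrite big_ord_recr /= mulSn addnC; apply: leq_add.
  by apply: IH => q /andP [Hq HqR]; apply: H; rewrite Hq /= ltnW.
by apply: H; rewrite leqnn.
Qed.

Lemma lv2 (g : nat -> nat) w R : (forall q, 0 < q <= R -> w <= g q) ->
  w * 'C(R, 2) <= \sum_(q < R.+1) (R - q) * g q.
Proof.
elim: R => [|R IH] H; first by rewrite bin0n muln0.
have H' : forall q, 0 < q <= R -> w <= g q.
  by move=> q /andP [Hq HqR]; apply: H; rewrite Hq /= ltnW.
rewrite big_ord_recr /= subnn mul0n addn0.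
have -> : \sum_(i < R.+1) (R.+1 - i) * g i = \sum_(i < R.+1) ((R - i) * g i + g i).
  apply: eq_bigr => i _; have Hi := ltn_ord i; rewrite subSn // mulSn addnC //.
rewrite big_split /= binS bin1 mulnDr; apply: leq_add; first exact: IH.
by rewrite mulnC; apply: lv1.
Qed.

Lemma lv3 (g : nat -> nat) w h R t0 : (forall q, 0 < q <= R -> w <= g q) ->
  0 < t0 <= R -> h <= g t0 -> w <= h ->
  R.-1 * w + h <= \sum_(q < R.+1) g q.
Proof.
move=> H Ht Hh Hwh.
pose g' q := if q == t0 then g q - (h - w) else g q.
have H1 : R * w <= \sum_(q < R.+1) g' q.
  apply: lv1 => q Hq; rewrite /g'; case: eqP => [->|_]; last exact: H.
  lia.
have Ht' : t0 < R.+1 by case/andP: Ht.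
rewrite (bigD1 (Ordinal Ht')) // in H1 *; rewrite /= /g' eqxx in H1.
have E : \sum_(i < R.+1 | i != Ordinal Ht') g' i = \sum_(i < R.+1 | i != Ordinal Ht') g i.
  apply: eq_bigr => i Hi; rewrite /g'; case: eqP => // Heq.
  by move: Hi; rewrite -(inj_eq val_inj) /= Heq eqxx.
rewrite E in H1; case/andP: Ht => Ht0 HtR.
have : 0 < R by apply: leq_trans HtR.
move: H1; set X := \sum_(i < R.+1 | i != Ordinal Ht') g i.
move=> H1 HR; rewrite -(prednK HR) mulSn in H1; rewrite (bigD1 (Ordinal Ht')) //= -/X; lia.
Qed.

Lemma part (I : eqType) (l : seq I) (t : I -> nat) R (f : I -> nat) :
  (forall s, s \in l -> t s <= R) ->
  \sum_(s <- l) f s = \sum_(q < R.+1) \sum_(s <- l | t s == q) f s.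
Proof.
move=> H.
rewrite (eq_bigr (fun q : 'I_R.+1 => \sum_(s <- l) (if t s == q then f s else 0))); last first.
  by move=> q _; rewrite big_mkcond.
rewrite exchange_big /= big_seq [RHS]big_seq; apply: eq_bigr => s Hs.
have Hs' : t s < R.+1 by rewrite ltnS H.
rewrite (bigD1 (Ordinal Hs')) //= eqxx big1 ?addn0 // => i Hi.
case: eqP => // E; move: Hi; rewrite -(inj_eq val_inj) /= -E eqxx //.
Qed.

Lemma level_bound (I : eqType) (l : seq I) (a t : I -> nat) (R w h : nat) (z : I) :
  uniq l -> (forall s, s \in l -> t s <= R) ->
  (forall q, 0 < q <= R -> exists2 s, s \in l & t s = q) ->
  (forall s, s \in l -> w <= a s) -> z \in l -> h <= a z -> w <= h -> 0 < t z ->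
  (\sum_(s <- l) a s * t s + w * 'C(R, 2) <= R * \sum_(s <- l) a s) /\
  (R.-1 * w + h <= \sum_(s <- l) a s).
Proof.
move=> U Ht Hlev Hw Hz Hh Hwh Htz.
pose g q := \sum_(s <- l | t s == q) a s.
have Hg : forall q, 0 < q <= R -> w <= g q.
  move=> q Hq; have [s Hs Hts] := Hlev q Hq.
  rewrite /g big_mkcond (bigD1_seq s) //= Hts eqxx; apply: leq_trans (Hw _ Hs) (leq_addr _ _).
have HM : \sum_(s <- l) a s = \sum_(q < R.+1) g q by apply: part.
split; last first.
  rewrite HM; apply: (lv3 (t0 := t z)) => //; first by rewrite Htz Ht.
  rewrite /g big_mkcond (bigD1_seq z) //= eqxx; apply: leq_trans Hh (leq_addr _ _).
have E1 : R * \sum_(s <- l) a s = \sum_(s <- l) a s * t s + \sum_(s <- l) a s * (R - t s).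
  rewrite -big_split /= big_distrr /= big_seq [RHS]big_seq; apply: eq_bigr => s Hs.
  by rewrite -mulnDr subnKC ?Ht // mulnC.
rewrite E1 leq_add2l.
have -> : \sum_(s <- l) a s * (R - t s) = \sum_(q < R.+1) (R - q) * g q.
  rewrite (part (fun s => a s * (R - t s)) Ht); apply: eq_bigr => q _.
  rewrite /g big_distrr /=; apply: eq_bigr => s /eqP ->; exact: mulnC.
exact: lv2.
Qed.

End PL.
Import PL.

Module PQ.
Set Implicit Arguments. Unset Strict Implicit. Unset Printing Implicit Defensive.
Import Order.TTheory GRing.Theory Num.Theory.
Local Open Scope ring_scope.

Lemma bin2_2 R : ('C(R, 2) * 2 = R * R.-1)%N.
Proof.
elim: R => [//|R IH]; rewrite binS bin1 mulnDl IH /=.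
case: R {IH} => [//|R] /=; nia.
Qed.

Definition G (w h M : rat) := let y := M - h in y ^+ 3 + 3 * h * y ^+ 2 + 3 * h * w * y.

Lemma K_bound (w h M R K : rat) : 0 < w -> w <= h -> 1 <= R -> (R - 1) * w + h <= M ->
  K <= 3 * (R * M - w * (R * (R - 1) / 2)) -> 2 * w * K <= 3 * (M - h + w) * (M + h).
Proof.
move=> Hw Hwh HR HM HK.
have H1 : 0 <= (M - h + w - w * R) * (M + h - w * R).
  apply: mulr_ge0; nra.
have E : 2 * w * (3 * (R * M - w * (R * (R - 1) / 2))) = 3 * (2 * (w * R) * M - (w * R) ^+ 2 + (w * R) * w).
  by field.
have : 2 * w * K <= 2 * w * (3 * (R * M - w * (R * (R - 1) / 2))).
  by rewrite ler_pM2l ?mulr_gt0.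
rewrite E; nra.
Qed.

Lemma G_step (w h M a : rat) : 0 < w -> w <= h -> h <= M -> w <= a ->
  G w h M + 3 * a * ((M - h + w) * (M + h)) <= G w h (M + a).
Proof.
move=> Hw Hwh HM Ha.
have E : G w h (M + a) - (G w h M + 3 * a * ((M - h + w) * (M + h))) =
  a * (3 * (M - h) * (a - w) + a ^+ 2 + 3 * h * (a - w)) by rewrite /G; ring.
rewrite -subr_ge0 E; apply: mulr_ge0; first lra.
have : 0 <= (M - h) * (a - w) by apply: mulr_ge0; lra.
have : 0 <= h * (a - w) by apply: mulr_ge0; lra.
nra.
Qed.

Lemma G_ge0 (w h M : rat) : 0 < w -> w <= h -> h <= M -> 0 <= G w h M.
Proof.
move=> Hw Hwh HM; rewrite /G.
have Hy : 0 <= M - h by lra.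
have H1 : 0 <= (M - h) ^+ 3 by apply: exprn_ge0.
have H2 : 0 <= 3 * h * (M - h) ^+ 2 by apply: mulr_ge0; [lra| apply: exprn_ge0].
have H3 : 0 <= 3 * h * w * (M - h) by apply: mulr_ge0 => //; apply: mulr_ge0; lra.
lra.
Qed.

Lemma final_ineq (w h n : rat) : 4 <= w -> w <= h -> h <= n ->
  G w h n + 4 * w * n ^+ 2 <= (n - h + w) * (n - h + w - 1) * (n + 2 * (h - 1)) + 4 * w * (n * (n - 1)).
Proof.
move=> Hw Hwh Hn.
set y := n - h.
have Hy : 0 <= y by rewrite /y; lra.
have E : (n - h + w) * (n - h + w - 1) * (n + 2 * (h - 1)) + 4 * w * (n * (n - 1)) - (G w h n + 4 * w * n ^+ 2)
  = (2 * w - 3) * y ^+ 2 + (3 * h * w - 3 * h + w ^+ 2 - 9 * w + 2) * y + w * (3 * h * w - 7 * h - 2 * w + 2).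
  by rewrite /G /y; ring.
rewrite -subr_ge0 E.
have A1 : 0 <= (2 * w - 3) * y ^+ 2 by apply: mulr_ge0; [lra | apply: exprn_ge0].
have B : 0 <= 3 * h * w - 3 * h + w ^+ 2 - 9 * w + 2.
  have : 0 <= (h - w) * (w - 1) by apply: mulr_ge0; lra.
  have : 0 <= (w - 4) * (w - 4) by apply: mulr_ge0; lra.
  nra.
have A2 : 0 <= (3 * h * w - 3 * h + w ^+ 2 - 9 * w + 2) * y by apply: mulr_ge0.
have C : 0 <= 3 * h * w - 7 * h - 2 * w + 2.
  have : 0 <= (h - w) * (3 * w - 7) by apply: mulr_ge0; lra.
  have : 0 <= (w - 4) * (w - 4) by apply: mulr_ge0; lra.
  nra.
have A3 : 0 <= w * (3 * h * w - 7 * h - 2 * w + 2) by apply: mulr_ge0; lra.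
lra.
Qed.

End PQ.
Import PQ.

Module PB.
Set Implicit Arguments. Unset Strict Implicit. Unset Printing Implicit Defensive.
Import Order.TTheory GRing.Theory Num.Theory.

Section Graph.
Variables (T : finType) (e : rel T).
Hypotheses (es : symmetric e) (ei : irreflexive e) (conn : connected_graph e).

Lemma reachG x y : reach e x y.
Proof. exact: connect_reach (conn x y). Qed.

Lemma dG_sym x y : dist e x y = dist e y x.
Proof. exact: (dist_sym es (reachG x y)). Qed.

Lemma dG_tri x y u : dist e x u <= dist e x y + dist e y u.
Proof. exact: dist_tri (reachG _ _) (reachG _ _). Qed.

Lemma dG_self x : dist e x x = 0.
Proof. exact: dist_self. Qed.

Lemma dG0 x y : dist e x y = 0 -> y = x.
Proof. exact: dist0 (reachG x y). Qed.

Lemma dG_edge w v : e w v -> dist e w v <= 1.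
Proof. move=> H; rewrite (distP (reachG w v)); exact: ball_step (ball_self _ _ _) H. Qed.

Lemma ball1E s : ball e 1 s = s |: [set y | e s y].
Proof.
apply/setP => y; rewrite !inE; apply/idP/idP.
  by move=> /orP [->//|/existsP [w /andP [Hw Hr]]]; move: Hw; rewrite inE => /eqP <-; rewrite Hr orbT.
move=> /orP [->//|Hr]; apply/orP; right; apply/existsP; exists s; by rewrite inE eqxx.
Qed.

Lemma ball1_card s : #|ball e 1 s| = (deg e s).+1.
Proof. by rewrite ball1E cardsU1 inE ei. Qed.

Lemma seq_argmin (f : T -> nat) (l : seq T) : l != [::] ->
  exists2 s, s \in l & forall s', s' \in l -> f s <= f s'.
Proof.
elim: l => [|x l IH] // _.
case: (altP (l =P [::])) => [->|Hl].
  by exists x; rewrite ?inE // => s'; rewrite inE => /eqP ->.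
have [s Hs Hm] := IH Hl.
case: (leqP (f x) (f s)) => H.
  exists x; first by rewrite inE eqxx.
  by move=> s'; rewrite inE => /orP [/eqP ->//|/Hm]; apply: leq_trans H.
exists s; first by rewrite inE Hs orbT.
by move=> s'; rewrite inE => /orP [/eqP ->|/Hm//]; apply: ltnW.
Qed.

Variable z : T.

Inductive grows : seq T -> Prop :=
| G0 : grows [:: z]
| GS l v : grows l -> (forall s, s \in l -> 3 <= dist e s v) ->
    (exists2 p, p \in l & dist e p v <= 3) -> grows (rcons l v).

Lemma grows_notin (l : seq T) (v : T) : (forall s, s \in l -> 3 <= dist e s v) -> v \notin l.
Proof. by move=> H; apply/negP => /H; rewrite dG_self. Qed.

Lemma grows_uniq l : grows l -> uniq l.
Proof.
elim=> [//|l' v _ IH Hs _]; by rewrite rcons_uniq IH grows_notin.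
Qed.

Lemma grows_z l : grows l -> z \in l.
Proof. by elim=> [|l' v _ IH _ _]; rewrite ?inE // mem_rcons inE IH orbT. Qed.

Lemma grows_sep l : grows l -> forall x y, x \in l -> y \in l -> x != y -> 3 <= dist e x y.
Proof.
elim=> [|l' v _ IH Hs _] x y; first by rewrite !inE => /eqP -> /eqP ->; rewrite eqxx.
rewrite !mem_rcons !inE => /orP [/eqP ->|Hx] /orP [/eqP ->|Hy]; rewrite ?eqxx //.
- by move=> _; rewrite dG_sym; apply: Hs.
- by move=> _; apply: Hs.
- exact: IH.
Qed.

Definition cand (l : seq T) (v : T) := all (fun s => 3 <= dist e s v) l && has (fun s => dist e s v == 3) l.

Definition step (l : seq T) := if [pick v | cand l v] is Some v then rcons l v else l.

Lemma grows_step l : grows l -> grows (step l).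
Proof.
move=> Hl; rewrite /step; case: pickP => // v /andP [/allP Ha /hasP [p Hp Hd]].
apply: GS => //; exists p => //; by rewrite (eqP Hd).
Qed.

Definition cs := iter #|T| step [:: z].

Lemma grows_iter k : grows (iter k step [:: z]).
Proof. elim: k => [|k IH]; [exact: G0 | exact: grows_step]. Qed.

Lemma grows_cs : grows cs.
Proof. exact: grows_iter. Qed.

Lemma iter_fix k : k < size (iter k step [:: z]) \/ step (iter k step [:: z]) = iter k step [:: z].
Proof.
elim: k => [|k IH]; first by left.
rewrite iterS.
case E: (step (iter k step [:: z]) == iter k step [:: z]).
  by right; rewrite (eqP E) (eqP E).
left; case: IH => [H|H]; last by rewrite H eqxx in E.
move: E; rewrite /step; case: pickP => [v _ _|_]; last by rewrite eqxx.
by rewrite size_rcons ltnS.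
Qed.

Lemma cs_fix : step cs = cs.
Proof.
case: (iter_fix #|T|) => // H; exfalso.
move: H; rewrite -/cs => H.
have U := grows_uniq grows_cs.
by move: (uniq_leq_size U (fun x _ => mem_enum T x)); rewrite -cardT leqNgt H.
Qed.

Lemma cs_nil : cs != [::].
Proof. by apply/negP => /eqP E; have := grows_z grows_cs; rewrite E. Qed.

Lemma cs_cover_aux k v : (forall s, s \in cs -> k + 3 <= dist e s v) ->
  (exists2 s, s \in cs & dist e s v = k + 3) -> False.
Proof.
elim: k v => [|k IH] v Hall [s Hs Hd].
  have Hc : cand cs v.
    apply/andP; split; first by apply/allP => s' /Hall.
    by apply/hasP; exists s => //; rewrite Hd.
  have := cs_fix; rewrite /step; case: pickP => [v' _ H|].
    by have := congr1 size H; rewrite size_rcons; lia.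
  by move=> /(_ v); rewrite Hc.
have Hp : 0 < dist e s v by rewrite Hd.
have [w [_ Dw Ew]] := dist_pred (reachG s v) Hp.
apply: (IH w).
  move=> s' Hs'; have := Hall s' Hs'; have := dG_tri s' w v; have := dG_edge Ew; lia.
by exists s => //; rewrite Dw Hd.
Qed.

Lemma cs_cover v : exists2 s, s \in cs & dist e s v <= 2.
Proof.
case: (boolP (has (fun s => dist e s v <= 2) cs)) => [/hasP [s Hs Hd]|Hn]; first by exists s.
exfalso.
have [s0 Hs0 Hm] := seq_argmin (fun s => dist e s v) cs_nil.
have H3 : 3 <= dist e s0 v.
  by rewrite ltnNge; apply/negP => H; move/hasP: Hn; apply; exists s0.
apply: (@cs_cover_aux (dist e s0 v - 3) v).
  by move=> s Hs; rewrite subnK //; apply: Hm.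
by exists s0 => //; rewrite subnK.
Qed.


Definition cl (x : T) : T :=
  match [pick s | (s \in cs) && (dist e s x <= 1)] with
  | Some s => s
  | None => odflt z [pick s | (s \in cs) && (dist e s x <= 2)]
  end.

Lemma cl_prop x : (cl x \in cs) && (dist e (cl x) x <= 2).
Proof.
rewrite /cl; case: pickP => [s /andP [-> H]|_]; first by rewrite /= (leq_trans H).
case: pickP => [s //|H]; exfalso.
have [s Hs Hd] := cs_cover x.
by have := H s; rewrite Hs Hd.
Qed.

Lemma cl_in x : cl x \in cs.
Proof. by case/andP: (cl_prop x). Qed.

Lemma cl_d x : dist e (cl x) x <= 2.
Proof. by case/andP: (cl_prop x). Qed.

Lemma cl_ball s y : s \in cs -> dist e s y <= 1 -> cl y = s.
Proof.
move=> Hs Hd; rewrite /cl; case: pickP => [s' /andP [Hs' Hd']|H]; last first.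
  by have := H s; rewrite Hs Hd.
apply/eqP; case: (altP (s' =P s)) => // Hne.
have := grows_sep grows_cs Hs' Hs Hne.
have := dG_tri s' y s; rewrite (dG_sym y s); lia.
Qed.

Definition wt (s : T) : nat := #|[set x | cl x == s]|.

Lemma wt_ge s : s \in cs -> (deg e s).+1 <= wt s.
Proof.
move=> Hs; rewrite -ball1_card; apply: subset_leq_card; apply/subsetP => y Hy.
rewrite inE; apply/eqP; apply: cl_ball => //.
by rewrite (distP (reachG s y)).
Qed.

Lemma fiber (F : T -> nat) : \sum_x F (cl x) = \sum_(s <- cs) wt s * F s.
Proof.
have U := grows_uniq grows_cs.
transitivity (\sum_x \sum_(s <- cs) (cl x == s) * F s).
  apply: eq_bigr => x _.
  rewrite (bigD1_seq (cl x)) ?cl_in //= eqxx mul1n big1 ?addn0 //.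
  by move=> s /negbTE; rewrite eq_sym => ->.
rewrite exchange_big; apply: eq_bigr => s _.
rewrite -big_distrl /= /wt -sum1_card [in RHS]big_mkcond /=.
by congr (_ * _); apply: eq_bigr => x _; rewrite inE; case: (cl x == s).
Qed.

Definition V (l : seq T) := \sum_(s <- l) \sum_(t <- l) wt s * wt t * dist e s t.

Lemma sum_decomp :
  \sum_x \sum_y dist e x y <= V cs + 4 * #|T| * #|T|.
Proof.
have H1 : forall x y, dist e x y <= dist e (cl x) (cl y) + 4.
  move=> x y; have := dG_tri x (cl x) y; have := dG_tri (cl x) (cl y) y.
  have := cl_d x; have := cl_d y; rewrite (dG_sym x (cl x)); lia.
apply: leq_trans (_ : \sum_x \sum_y (dist e (cl x) (cl y) + 4) <= _).
  by apply: leq_sum => x _; apply: leq_sum => y _; apply: H1.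
under eq_bigr do rewrite big_split /= sum_nat_const.
rewrite big_split /= sum_nat_const.
suff -> : \sum_x \sum_y dist e (cl x) (cl y) = V cs.
  by rewrite leq_add2l -mulnA mulnC [_ * 4]mulnC -mulnA.
rewrite /V.
transitivity (\sum_x \sum_(t <- cs) wt t * dist e (cl x) t).
  by apply: eq_bigr => x _; rewrite (fiber (fun t => dist e (cl x) t)).
rewrite (fiber (fun s => \sum_(t <- cs) wt t * dist e s t)).
apply: eq_bigr => s _; rewrite big_distrr /=; apply: eq_bigr => t _; by rewrite mulnA.
Qed.

Lemma seq_argmax (f : T -> nat) (l : seq T) : l != [::] ->
  exists2 s, s \in l & forall s', s' \in l -> f s' <= f s.
Proof.
elim: l => [|x l IH] // _.
case: (altP (l =P [::])) => [->|Hl].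
  by exists x; rewrite ?inE // => s'; rewrite inE => /eqP ->.
have [s Hs Hm] := IH Hl.
case: (leqP (f s) (f x)) => H.
  exists x; first by rewrite inE eqxx.
  by move=> s'; rewrite inE => /orP [/eqP ->//|/Hm]; move/leq_trans; apply.
exists s; first by rewrite inE Hs orbT.
by move=> s'; rewrite inE => /orP [/eqP ->|/Hm//]; apply: ltnW.
Qed.

Definition eH (S : pred T) : rel T := fun x y => S x && S y && (dist e x y <= 3).

Lemma eH_sym S : symmetric (eH S).
Proof. by move=> x y; rewrite /eH dG_sym [S x && _]andbC. Qed.

Lemma ballH_dG S k x y : y \in ball (eH S) k x -> dist e x y <= 3 * k.
Proof.
elim: k y => [|k IH] y; first by rewrite in_ball0 => /eqP ->; rewrite dG_self.
case/ballSP => [H|[w Hw /andP [_ Hd]]].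
  by apply: leq_trans (IH _ H) _; rewrite leq_mul2l ltnW.
have := IH _ Hw; have := dG_tri x w y; lia.
Qed.

Lemma dG_H S x y : reach (eH S) x y -> dist e x y <= 3 * dist (eH S) x y.
Proof. by move=> H; apply: ballH_dG; apply: dist_in. Qed.

Lemma grows_reachH l : grows l -> forall S : pred T, {subset l <= S} ->
  forall s, s \in l -> reach (eH S) z s.
Proof.
elim=> [|l' v Hl IH Hs [p Hp Hpv]] S HS s.
  by rewrite inE => /eqP ->; apply: reach_refl.
have HS' : {subset l' <= S} by move=> x Hx; apply: HS; rewrite mem_rcons inE Hx orbT.
rewrite mem_rcons inE => /orP [/eqP ->|Hx]; last exact: IH.
apply: reach_trans (IH S HS' p Hp) _.
exists 1; apply: ball_step (ball_self _ _ _) _.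
rewrite /eH Hpv andbT; apply/andP; split; first exact: (HS' _ Hp).
by apply: HS; rewrite mem_rcons inE eqxx.
Qed.

Lemma V_rcons l v : V (rcons l v) = V l + 2 * (wt v * \sum_(s <- l) wt s * dist e v s).
Proof.
rewrite /V !big_rcons /= dG_self muln0 addn0.
under eq_bigr do rewrite big_rcons /=.
rewrite big_split /= -addnA; congr (_ + _).
rewrite mul2n -addnn; congr (_ + _); last by rewrite big_distrr /=; apply: eq_bigr => s _; rewrite mulnA.
rewrite big_distrr /=; apply: eq_bigr => s _; rewrite dG_sym; ring.
Qed.

Lemma main_ind (w h : nat) : (forall s, s \in cs -> w <= wt s) -> h <= wt z -> w <= h -> 0 < w ->
  forall l, grows l -> {subset l <= cs} ->
  (2 * w%:R * (V l)%:R <= 2 * G w%:R h%:R (\sum_(s <- l) wt s)%:R :> rat)%R.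
Proof.
move=> Hw Hz Hwh Hw0.
have Hwq : (0 < w%:R :> rat)%R by rewrite ltr0n.
have Hwhq : (w%:R <= h%:R :> rat)%R by rewrite ler_nat.
move=> l0 Hl0; elim: l0 / Hl0 => [|l v Hl IH Hsep [p Hp Hpv]] Hsub.
  rewrite /V !big_seq1 dG_self muln0 mulr0.
  apply: mulr_ge0 => //; apply: G_ge0 => //; by rewrite ler_nat.
have Hsub' : {subset l <= cs} by move=> x Hx; apply: Hsub; rewrite mem_rcons inE Hx orbT.
have Hgr : grows (rcons l v) by apply: GS => //; exists p.
have Hvl : v \notin l by apply: grows_notin.
have Hzl : z \in l := grows_z Hl.
have Ul : uniq l := grows_uniq Hl.
pose S : pred T := fun x => x \in rcons l v.
have HS : {subset rcons l v <= S} by [].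
have Hreach : forall s, s \in l -> reach (eH S) v s.
  move=> s Hs; apply: reach_trans (reach_sym (@eH_sym S) (grows_reachH Hgr HS _)) _.
    by rewrite mem_rcons inE eqxx.
  by apply: (grows_reachH Hgr HS); rewrite mem_rcons inE Hs orbT.
pose t s := dist (eH S) v s.
have Hln : l != [::] by apply/negP => /eqP E; rewrite E in Hzl.
have [smax Hsmax Hmax] := seq_argmax t Hln.
set R := t smax.
have Hlev : forall q, 0 < q <= R -> exists2 s, s \in l & t s = q.
  move=> q /andP [Hq HqR].
  have [u [Ru Du Eu]] := dist_level (Hreach _ Hsmax) HqR.
  have [w' /andP [/andP [_ Su] _]] := Eu Hq.
  exists u => //; move: Su; rewrite /S mem_rcons inE => /orP [/eqP Euv|//].
  by move: Du; rewrite Euv dist_self => E; rewrite -E in Hq.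
have Htz : 0 < t z.
  rewrite lt0n; apply/negP => /eqP E; have := dist0 (Hreach _ Hzl) E.
  by move=> Ezv; move: Hvl; rewrite -Ezv Hzl.
have [HA HB] := level_bound Ul Hmax Hlev (fun s Hs => Hw s (Hsub' s Hs)) Hzl Hz Hwh Htz.
set M := \sum_(s <- l) wt s in HA HB *.
set K := \sum_(s <- l) wt s * dist e v s.
have HK : K <= 3 * \sum_(s <- l) wt s * t s.
  rewrite /K big_distrr /= big_seq [X in _ <= X]big_seq; apply: leq_sum => s Hs.
  by rewrite mulnCA leq_mul2l (dG_H (Hreach _ Hs)) orbT.
have HR : 0 < R := leq_trans Htz (Hmax _ Hzl).
have HKn : K + 3 * (w * 'C(R, 2)) <= 3 * (R * M).
  apply: leq_trans (leq_add HK (leqnn _)) _; rewrite -mulnDr leq_mul2l; apply/orP; right; exact: HA.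
have HKq : (K%:R <= 3 * (R%:R * M%:R - w%:R * (R%:R * (R%:R - 1) / 2)) :> rat)%R.
  have E2 : ('C(R, 2)%:R = R%:R * (R%:R - 1) / 2 :> rat)%R.
    have ER : ((R.-1)%:R = R%:R - 1 :> rat)%R by rewrite -{2}(prednK HR) -natr1 addrK.
    have := congr1 (fun n => n%:R : rat) (bin2_2 R); rewrite /= !natrM ER => E; lra.
  move: HKn; rewrite -(ler_nat rat) !natrD !natrM E2; lra.
have HMh : h <= M.
  rewrite /M (bigD1_seq z) //=.
  exact: leq_trans Hz (leq_addr _ _).
have HBq : ((R%:R - 1) * w%:R + h%:R <= M%:R :> rat)%R.
  move: HB; rewrite -/R -(ler_nat rat) natrD natrM -(prednK HR) -natr1; lra.
have HR1 : (1 <= R%:R :> rat)%R by rewrite ler1n.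
have HK2 := K_bound Hwq Hwhq HR1 HBq HKq.
have Hwv : w <= wt v by apply: Hw; apply: Hsub; rewrite mem_rcons inE eqxx.
have HGs := G_step (M := M%:R) (a := (wt v)%:R) Hwq Hwhq (ltac:(by rewrite ler_nat)) (ltac:(by rewrite ler_nat)).
rewrite V_rcons big_rcons /= natrD natrD natrM natrM.
have IH' := IH Hsub'.
fold M in IH'.
have HKa : (0 <= (wt v)%:R :> rat)%R by [].
have := ler_wpM2l HKa HK2.
nra.
Qed.

End Graph.

End PB.
Import PB.

Module PF.
Set Implicit Arguments. Unset Strict Implicit. Unset Printing Implicit Defensive.
Import Order.TTheory GRing.Theory Num.Theory.
Local Open Scope ring_scope.

Lemma deg_le (T : finType) (e : rel T) x : (deg e x <= #|T|)%N.
Proof. exact: max_card. Qed.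

Lemma bigmin_seq_le (I : eqType) (r : seq I) (F : I -> nat) k x : x \in r ->
  (\big[minn/k]_(i <- r) F i <= F x)%N.
Proof.
elim: r => [//|a r IH]; rewrite inE big_cons => /orP [/eqP ->|Hx].
  exact: geq_minl.
by apply: leq_trans (geq_minr _ _) (IH Hx).
Qed.

Lemma mindeg_le (T : finType) (e : rel T) x : (mindeg e <= deg e x)%N.
Proof. by apply: bigmin_seq_le; rewrite mem_index_enum. Qed.

Lemma mindeg_card (T : finType) (e : rel T) : (mindeg e <= #|T|)%N.
Proof.
rewrite /mindeg; elim/big_ind: _ => // [a b Ha Hb|x _]; last exact: deg_le.
by rewrite geq_min Ha.
Qed.


End PF.
Import PF.

Import Order.TTheory.
Local Open Scope ring_scope.

Theorem theorem4p1 (T : finType) (e : rel T) :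
  simple_graph e -> connected_graph e -> (3 <= mindeg e)%N ->
  let n := #|T| in
  let delta := mindeg e in
  let Delta := maxdeg e in
  let N := (n - Delta + delta)%N in
  avg_dist e <=
    ((N * (N - 1))%N%:R / ((n * (n - 1))%N%:R : rat))
      * ((n + 2 * Delta)%N%:R / (delta + 1)%N%:R) + 4.
Proof.
move=> [es ei] conn Hd; cbv zeta.
set n := #|T|; set delta := mindeg e; set Delta := maxdeg e.
set N := (n - Delta + delta)%N.
have Hn3 : (3 <= n)%N by apply: leq_trans Hd (mindeg_card e).
have Hn0 : (0 < #|T|)%N by apply: leq_trans Hn3.
have [z Hz] := @bigop.eq_bigmax T (deg e) Hn0.
have HDz : Delta = deg e z by rewrite /Delta /maxdeg Hz.
have Hcsz := grows_z (grows_cs e z).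
set cs := PB.cs e z in Hcsz.
have Hdz : ((deg e z).+1 <= n)%N.
  by rewrite -(ball1_card ei) max_card.
have Hwz : (delta <= deg e z)%N by apply: mindeg_le.
have Hw : forall s, s \in cs -> (delta.+1 <= wt e z s)%N.
  move=> s Hs; apply: leq_trans (wt_ge es ei conn Hs); rewrite ltnS; exact: mindeg_le.
have Hh : ((deg e z).+1 <= wt e z z)%N by apply: wt_ge.
have HM := main_ind es conn Hw Hh (ltac:(by rewrite ltnS)) (ltac:(by [])) (grows_cs e z) (fun x H => H).
have Hsum : (\sum_(s <- cs) wt e z s = n)%N.
  have := fiber conn z (fun _ => 1%N); rewrite sum1_card => E.
  rewrite /n; transitivity (\sum_(s <- cs) wt e z s * 1)%N; last by rewrite -E.
  by apply: eq_bigr => s _; rewrite muln1.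
rewrite -/cs Hsum in HM.
have HS := sum_decomp es conn z.
set S2 := (\sum_x \sum_y dist e x y)%N in HS.
set Vc := V e z (PB.cs e z) in HM HS.
have HW : (2 * (S2 %/ 2) <= S2)%N by rewrite mulnC leq_trunc_div.
rewrite /avg_dist /wiener -/S2 -/n.
set W := (S2 %/ 2)%N.
have Hn1 : (1 <= n)%N by apply: leq_trans Hn3.
have HDn : (Delta <= n)%N by rewrite HDz; apply: ltnW.
have HNn : (1 <= N)%N.
  by rewrite /N; apply: leq_trans (_ : 1 <= delta)%N _; [apply: leq_trans Hd | apply: leq_addl].
have EC : ('C(n, 2)%:R = n%:R * (n%:R - 1) / 2 :> rat).
  have ER : ((n.-1)%:R = n%:R - 1 :> rat) by rewrite -{2}(prednK Hn1) -natr1 addrK.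
  have := congr1 (fun k => k%:R : rat) (bin2_2 n); rewrite /= !natrM ER => E; lra.
have EN : (N%:R = n%:R - Delta%:R + delta%:R :> rat) by rewrite /N natrD natrB.
have EN1 : ((N - 1)%N%:R = N%:R - 1 :> rat) by rewrite natrB.
have En1 : ((n - 1)%N%:R = n%:R - 1 :> rat) by rewrite natrB.

rewrite !natrM EN1 En1 !natrD ?natrM EC natrB //.
have Hd3 : (3 <= delta%:R :> rat) by rewrite (ler_nat rat 3).
have HDd : (delta%:R <= Delta%:R :> rat) by rewrite ler_nat HDz.
have HDn' : (Delta%:R + 1 <= n%:R :> rat) by rewrite HDz natr1 ler_nat.
have Hn3' : (3 <= n%:R :> rat) by rewrite (ler_nat rat 3).
have HF := final_ineq (w := delta%:R + 1) (h := Delta%:R + 1) (n := n%:R)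
  ltac:(lra) ltac:(lra) HDn'.
have HMq : (delta%:R + 1) * (V e z (PB.cs e z))%:R <= G (delta%:R + 1) (Delta%:R + 1) n%:R.
  move: HM; rewrite -/n HDz -!natr1; lra.
have HSq : (S2%:R <= (V e z (PB.cs e z))%:R + 4 * n%:R ^+ 2 :> rat).
  by move: HS; rewrite -(ler_nat rat) natrD !natrM; move=> H; rewrite expr2 mulrA.
have HWq : (2 * W%:R <= S2%:R :> rat) by move: HW; rewrite -(ler_nat rat) natrM.
have Hnpos : 0 < n%:R * (n%:R - 1) / 2 :> rat.
  apply: divr_gt0 => //; apply: mulr_gt0; lra.
rewrite ler_pdivrMr //.
have Hnn : n%:R * (n%:R - 1) != 0 :> rat by apply: lt0r_neq0; move: Hnpos; lra.
have Hw0 : delta%:R + 1 != 0 :> rat by apply: lt0r_neq0; lra.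
set A := ((n%:R - Delta%:R) + delta%:R) * ((n%:R - Delta%:R) + delta%:R - 1) :> rat.
have E : (A / (n%:R * (n%:R - 1)) * ((n%:R + (Delta%:R + (Delta%:R + 0))) / (delta%:R + 1)) + 4) * (n%:R * (n%:R - 1) / 2)
  = (A * (n%:R + 2 * (Delta%:R + 1 - 1)) + 4 * (delta%:R + 1) * (n%:R * (n%:R - 1))) / (2 * (delta%:R + 1)) :> rat.
  field; rewrite Hw0 /=; apply/andP; split; apply: lt0r_neq0; lra.
rewrite E ler_pdivlMr; last lra.
have H2 : (0 <= delta%:R + 1 :> rat) by lra.
have := ler_wpM2l H2 HSq.
rewrite /A; move: HF.
have -> : n%:R - (Delta%:R + 1) + (delta%:R + 1) = n%:R - Delta%:R + delta%:R :> rat by ring.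
have := ler_wpM2l H2 HWq.
lra.
Qed.
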